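(* Let $D$ be a non-principal ultrafilter on $\omega$, $\mathbb P$ a poset, and $Q\subseteq\mathbb P$ suff-$D$-lim-linked, witnessed by $\lim^D:Q^\omega\to\mathbb P$. Then $Q$ is $D$-lim-linked, witnessed by the same function $\lim^D$. In particular, every suff-uf-lim-linked subset of a poset is uf-lim-linked.
   Context: For $Q\subseteq\mathbb P$, an ultrafilter $D$ on $\omega$ and $\lim^D:Q^\omega\to\mathbb P$, condition $(\star)_n$ says: whenever $\bar q^j=\langle q^j_m:m<\omega\rangle\in Q^\omega$ for $j<n$ and $r\in\mathbb P$ satisfies $r\leq\lim^D\bar q^j$ for all $j<n$, then $\{m<\omega: r \text{ and all } q^j_m\ (j<n)\text{ have a common extension}\}\in D$. $Q$ is suff-$D$-lim-linked if some $\lim^D:Q^\omega\to\mathbb P$ satisfies $(\star)_n$ for all $n<\omega$; suff-uf-lim-linked if this holds for every non-principal ultrafilter $D$. $Q$ is $D$-lim-linked, witnessed by $\lim^D:Q^\omega\to\mathbb P$, if there is a $\mathbb P$-name $\dot D'$ of an ultrafilter on $\omega$ extending $D$ such that for every $\bar q=\langle q_m\rangle\in Q^\omega$, $\lim^D\bar q\Vdash_{\mathbb P}\{m:q_m\in\dot G\}\in\dot D'$; uf-lim-linked if it is $D$-lim-linked for every non-principal ultrafilter $D$. *)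

(* Defs.v *)
(* plain Prop-valued sets; forcing over an abstract poset
   rendered via its forcing relation on nice names. *)

Set Implicit Arguments.

Definition ultrafilter (D : (nat -> Prop) -> Prop) : Prop :=
  (forall A B : nat -> Prop, D A -> (forall m, A m -> B m) -> D B) /\
  (forall A B : nat -> Prop, D A -> D B -> D (fun m => A m /\ B m)) /\
  ~ D (fun _ => False) /\
  (forall A : nat -> Prop, D A \/ D (fun m => ~ A m)).

Definition nonprincipal (D : (nat -> Prop) -> Prop) : Prop :=
  forall n : nat, ~ D (fun m => m = n).

Definition is_poset (T : Type) (le : T -> T -> Prop) : Prop :=
  (forall p, le p p) /\
  (forall p q r, le p q -> le q r -> le p r) /\
  (forall p q, le p q -> le q p -> p = q).

Definition compat (T : Type) (le : T -> T -> Prop) (p q : T) : Prop :=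
  exists r, le r p /\ le r q.

Definition dense_below (T : Type) (le : T -> T -> Prop) (p : T) (X : T -> Prop) : Prop :=
  forall r, le r p -> exists s, le s r /\ X s.

(** ** Nice P-names for subsets of omega.
    A name [sigma] assigns to each [n] a set of conditions; its evaluation
    by a generic filter G is { n | G meets sigma n }. *)
Definition name (T : Type) := nat -> T -> Prop.

Definition forces_in (T : Type) (le : T -> T -> Prop) (p : T) (sigma : name T) (n : nat) : Prop :=
  dense_below le p (fun s => exists a, sigma n a /\ le s a).

Definition forces_sub (T : Type) (le : T -> T -> Prop) (p : T) (sigma tau : name T) : Prop :=
  forall n r, le r p -> forces_in le r sigma n -> forces_in le r tau n.

Definition forces_sub2 (T : Type) (le : T -> T -> Prop) (p : T) (sigma tau rho : name T) : Prop :=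
  forall n r, le r p -> forces_in le r sigma n -> forces_in le r tau n ->
    forces_in le r rho n.

Definition empty_name (T : Type) : name T := fun _ _ => False.
Definition check_name (T : Type) (X : nat -> Prop) : name T := fun n _ => X n.
Definition compl_name (T : Type) (le : T -> T -> Prop) (sigma : name T) : name T :=
  fun n s => forall a, sigma n a -> ~ compat le s a.
(** the name for { m | q_m \in G } *)
Definition generic_name (T : Type) (q : nat -> T) : name T := fun n s => s = q n.

(** [U sigma p] is to be read "p ||- sigma \in D'".  The following says
    that U is the forcing relation of the atomic formula "sigma \in D'" for a
    P-name D' of an ultrafilter on omega extending D. *)
Definition ultrafilter_name_ext (T : Type) (le : T -> T -> Prop)
    (D : (nat -> Prop) -> Prop) (U : name T -> T -> Prop) : Prop :=
  (forall sigma p r, U sigma p -> le r p -> U sigma r) /\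
  (forall sigma p, dense_below le p (U sigma) -> U sigma p) /\
  (* upward closed (also gives extensionality) *)
  (forall sigma tau p, U sigma p -> forces_sub le p sigma tau -> U tau p) /\
  (forall sigma tau rho p, U sigma p -> U tau p -> forces_sub2 le p sigma tau rho ->
       U rho p) /\
  (forall p, ~ U (@empty_name T) p) /\
  (forall sigma p, dense_below le p (fun r => U sigma r \/ U (compl_name le sigma) r)) /\
  (forall X p, D X -> U (@check_name T X) p).

Definition star_n (T : Type) (le : T -> T -> Prop) (Q : T -> Prop)
    (D : (nat -> Prop) -> Prop) (lim : (nat -> T) -> T) (n : nat) : Prop :=
  forall qs : nat -> nat -> T,
    (forall j m, j < n -> Q (qs j m)) ->
    forall r : T, (forall j, j < n -> le r (lim (qs j))) ->
    D (fun m => exists s, le s r /\ forall j, j < n -> le s (qs j m)).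

Definition suff_D_lim_linked_by (T : Type) (le : T -> T -> Prop) (Q : T -> Prop)
    (D : (nat -> Prop) -> Prop) (lim : (nat -> T) -> T) : Prop :=
  forall n, star_n le Q D lim n.

Definition D_lim_linked_by (T : Type) (le : T -> T -> Prop) (Q : T -> Prop)
    (D : (nat -> Prop) -> Prop) (lim : (nat -> T) -> T) : Prop :=
  exists U : name T -> T -> Prop,
    ultrafilter_name_ext le D U /\
    forall q : nat -> T, (forall m, Q (q m)) -> U (generic_name q) (lim q).

Definition suff_uf_lim_linked (T : Type) (le : T -> T -> Prop) (Q : T -> Prop) : Prop :=
  forall D, ultrafilter D -> nonprincipal D ->
    exists lim, suff_D_lim_linked_by le Q D lim.

Definition uf_lim_linked (T : Type) (le : T -> T -> Prop) (Q : T -> Prop) : Prop :=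
  forall D, ultrafilter D -> nonprincipal D ->
    exists lim, D_lim_linked_by le Q D lim.

(* Main.v *)
Require Import Defs.
From Stdlib Require Import Classical List.
Set Implicit Arguments.

Section Gen.
Variables (T : Type) (le : T -> T -> Prop).
Hypothesis hrefl : forall p, le p p.
Hypothesis htrans : forall p q r, le p q -> le q r -> le p r.

Definition filt (U : name T -> T -> Prop) : Prop :=
 (forall s p r, U s p -> le r p -> U s r) /\
 (forall s t p, U s p -> forces_sub le p s t -> U t p) /\
 (forall s t rho p, U s p -> U t p -> forces_sub2 le p s t rho -> U rho p) /\
 (forall p, ~ U (@empty_name T) p).

Lemma dense_down p r X : dense_below le p X -> le r p -> dense_below le r X.
Proof. intros H hr s hs. apply H. eapply htrans; eauto. Qed.

Lemma dense_mono p (X Y : T -> Prop) : dense_below le p X -> (forall s, X s -> Y s) -> dense_below le p Y.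
Proof. intros H HXY r hr. destruct (H r hr) as [s [h1 h2]]. eauto. Qed.

Lemma dense_dense p X : dense_below le p (fun r => dense_below le r X) -> dense_below le p X.
Proof. intros H r hr. destruct (H r hr) as [s [h1 h2]]. destruct (h2 s (hrefl s)) as [t [h3 h4]]. exists t; split; eauto. Qed.

Lemma fin_down p r s n : forces_in le p s n -> le r p -> forces_in le r s n.
Proof. apply dense_down. Qed.

Lemma fin_dense p s n : dense_below le p (fun r => forces_in le r s n) -> forces_in le p s n.
Proof. apply dense_dense. Qed.

Lemma fsub_down p r s t : forces_sub le p s t -> le r p -> forces_sub le r s t.
Proof. intros H hr n r' hr'. apply H. eauto. Qed.

Lemma fsub2_down p r s t u : forces_sub2 le p s t u -> le r p -> forces_sub2 le r s t u.
Proof. intros H hr n r' hr'. apply H. eauto. Qed.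

Definition meetn (a b : name T) : name T :=
  fun n s => forces_in le s a n /\ forces_in le s b n.

Lemma fin_meet s a b n : forces_in le s a n -> forces_in le s b n -> forces_in le s (meetn a b) n.
Proof.
  intros Ha Hb r hr. exists r. split. apply hrefl. exists r.
  split; [split; eapply fin_down; eauto | apply hrefl].
Qed.

Lemma fin_meet_inv s a b n : forces_in le s (meetn a b) n -> forces_in le s a n /\ forces_in le s b n.
Proof.
  intros H; split; apply fin_dense; (eapply dense_mono; [exact H|]);
  intros t [a' [[Ha Hb] ht]]; eapply fin_down; eauto.
Qed.

Lemma compl_lemma t s rho : forces_sub2 le t s rho (@empty_name T) -> forces_sub le t rho (compl_name le s).
Proof.
  intros H n r hr Hr t' ht'.
  destruct (classic (exists b, s n b /\ compat le t' b)) as [[b [hb [w [hw1 hw2]]]] | hno].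
  - exfalso. assert (Hs: forces_in le w s n).
    { intros x hx. exists x. split. apply hrefl. exists b. split; auto. eapply htrans; eauto. }
    assert (hwr: le w r) by eauto.
    specialize (H n w (htrans hwr hr) Hs ltac:(eapply fin_down; [exact Hr| exact hwr])).
    destruct (H w (hrefl w)) as [s' [_ [a [ha _]]]]. exact ha.
  - exists t'. split. apply hrefl. exists t'. split; [|apply hrefl].
    intros a ha hc. apply hno. eauto.
Qed.

Lemma union_filt (G W : name T -> T -> Prop) : filt W -> (forall s p, G s p -> W s p) ->
  filt (fun s p => G s p \/ W s p).
Proof.
  intros [h1 [h2 [h3 h4]]] hGW. split; [|split; [|split]].
  - intros s p r [H|H] hr; right; eauto.
  - intros s t p [H|H] hs; right; eauto.
  - intros s t u p [H|H] [H'|H'] hs; right; eauto.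
  - intros p [H|H]; eapply h4; eauto.
Qed.

Section Ext.
Variables (U : name T -> T -> Prop) (sg : name T) (r : T).
Hypothesis hU : filt U.
Hypothesis hne : forall p, exists rho, U rho p.
Hypothesis hcomp : forall s, le s r -> ~ U (compl_name le sg) s.

Definition Sx tau t := U tau t \/ (le t r /\ exists rho, U rho t /\ forces_sub2 le t sg rho tau).
Definition Ux tau q := dense_below le q (Sx tau).

Lemma Sx_down tau t t' : Sx tau t -> le t' t -> Sx tau t'.
Proof.
  destruct hU as [h1 _].
  intros [H | [htr [rho [Hr H2]]]] ht; [left; eauto | right; split; [eauto|]].
  exists rho; split; [eauto | eapply fsub2_down; eauto].
Qed.

Lemma Ux_filt : filt Ux.
Proof.
  destruct hU as [Ud [Uu [Ui Up]]].
  split; [|split; [|split]].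
  - intros; eapply dense_down; eauto.
  - intros a b p H Hsub s hs. destruct (H s hs) as [t [ht St]]. exists t; split; auto.
    assert (Hsub' := fsub_down Hsub (htrans ht hs)).
    destruct St as [Ua | [htr [rho [Ur H2]]]]; [left; eauto | right; split; auto].
    exists rho; split; auto. intros n x hx h1 h2. apply Hsub'; auto.
  - intros a b c p Ha Hb Hsub s hs. destruct (Ha s hs) as [t [ht Sa]].
    destruct (Hb t (htrans ht hs)) as [t' [ht' Sb]].
    exists t'. split; [eauto|].
    pose proof (Sx_down Sa ht') as Sa'.
    assert (hsub' := fsub2_down Hsub (htrans ht' (htrans ht hs))).
    destruct Sa' as [Ua | [htr [r1 [Ur1 H1]]]]; destruct Sb as [Ub | [htr' [r2 [Ur2 H2]]]].
    + left; eauto.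
    + right; split; auto. exists (meetn a r2); split.
      * eapply Ui; [exact Ua|exact Ur2|]. intros n x hx h1 h2; apply fin_meet; auto.
      * intros n x hx hs' hm. destruct (fin_meet_inv hm) as [h1 h2]. apply hsub'; auto.
    + right; split; auto. exists (meetn r1 b); split.
      * eapply Ui; [exact Ur1|exact Ub|]. intros n x hx h1 h2; apply fin_meet; auto.
      * intros n x hx hs' hm. destruct (fin_meet_inv hm) as [h1 h2]. apply hsub'; auto.
    + right; split; auto. exists (meetn r1 r2); split.
      * eapply Ui; [exact Ur1|exact Ur2|]. intros n x hx h1 h2; apply fin_meet; auto.
      * intros n x hx hs' hm. destruct (fin_meet_inv hm) as [h1 h2]. apply hsub'; auto.
  - intros p H. destruct (H p (hrefl p)) as [t [htp St]].
    destruct St as [U0 | [htr [rho [Ur H2]]]]; [exact (Up t U0)|].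
    apply (hcomp htr). eapply Uu; [exact Ur|]. apply compl_lemma; auto.
Qed.

Lemma U_Ux tau q : U tau q -> Ux tau q.
Proof. destruct hU as [Ud _]. intros H s hs; exists s; split; [apply hrefl | left; eauto]. Qed.

Lemma Ux_sg : Ux sg r.
Proof.
  intros s hs; exists s; split; [apply hrefl|right; split; auto].
  destruct (hne s) as [rho Ur]. exists rho; split; auto.
  intros n x hx h1 h2; exact h1.
Qed.
End Ext.

Definition Uc (U : name T -> T -> Prop) tau p := dense_below le p (U tau).

Lemma Uc_filt U : filt U -> filt (Uc U).
Proof.
  intros [Ud [Uu [Ui Up]]]. split; [|split; [|split]].
  - intros; eapply dense_down; eauto.
  - intros a b p H Hs s hs. destruct (H s hs) as [t [ht Ha]]. exists t; split; auto.
    eapply Uu; eauto. eapply fsub_down; eauto.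
  - intros a b c p Ha Hb Hs s hs. destruct (Ha s hs) as [t [ht Sa]].
    destruct (Hb t (htrans ht hs)) as [t' [ht' Sb]].
    exists t'; split; eauto. eapply Ui; [eapply Ud; [exact Sa| exact ht'] | exact Sb |]. eapply fsub2_down; [exact Hs|]. eauto.
  - intros p H. destruct (H p (hrefl p)) as [t [_ Ht]]. eapply Up; eauto.
Qed.

Lemma U_Uc U tau q : filt U -> U tau q -> Uc U tau q.
Proof. intros [Ud _] H s hs; exists s; split; [apply hrefl | eauto]. Qed.

End Gen.


Section G.
Variables (T : Type) (le : T -> T -> Prop) (Q : T -> Prop)
  (D : (nat -> Prop) -> Prop) (lim : (nat -> T) -> T).
Hypothesis hrefl : forall p, le p p.
Hypothesis htrans : forall p q r, le p q -> le q r -> le p r.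
Hypothesis hD : ultrafilter D.
Hypothesis hstar : suff_D_lim_linked_by le Q D lim.

Definition G0 (tau : name T) (s : T) : Prop :=
  exists X, D X /\ exists l : list (nat -> T),
    (forall q, In q l -> (forall m, Q (q m)) /\ le s (lim q)) /\
    forall m r, le r s -> X m -> (forall q, In q l -> forces_in le r (generic_name q) m) ->
      forces_in le r tau m.

Lemma D_true : D (fun _ => True).
Proof.
  destruct hD as [hup [_ [hne hult]]].
  destruct (hult (fun _ => False)) as [H|H]; [contradiction|].
  eapply hup; [exact H|]. auto.
Qed.

Lemma G0_check X p : D X -> G0 (check_name X) p.
Proof.
  intros HX. exists X; split; auto. exists nil; split; [intros q []|].
  intros m r hr Xm _ t ht. exists t; split; [apply hrefl|]. exists t; split; auto.
Qed.

Lemma G0_gen q : (forall m, Q (q m)) -> G0 (generic_name q) (lim q).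
Proof.
  intros hq. exists (fun _ => True); split; [apply D_true|].
  exists (q :: nil); split.
  - intros q' [<-|[]]; split; auto.
  - intros m r hr _ H. apply H. left; auto.
Qed.

Lemma G0_filt : filt le G0.
Proof.
  destruct hD as [hup [hint [hne hult]]].
  split; [|split; [|split]].
  - intros s p r [X [HX [l [hl hf]]]] hr. exists X; split; auto. exists l; split.
    + intros q hq. destruct (hl q hq); split; eauto.
    + intros m r' hr'; apply hf; eauto.
  - intros s t p [X [HX [l [hl hf]]]] hsub. exists X; split; auto. exists l; split; [exact hl|].
    intros m r hr Xm hg. apply hsub; auto.
  - intros a b c p [X1 [HX1 [l1 [hl1 hf1]]]] [X2 [HX2 [l2 [hl2 hf2]]]] hsub.
    exists (fun m => X1 m /\ X2 m); split; auto. exists (l1 ++ l2); split.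
    + intros q hq. apply in_app_or in hq. destruct hq; auto.
    + intros m r hr [x1 x2] hg. apply hsub; auto.
      * apply hf1; auto. intros q hq; apply hg; apply in_or_app; auto.
      * apply hf2; auto. intros q hq; apply hg; apply in_or_app; auto.
  - intros s [X [HX [l [hl hf]]]].
    set (qs := fun j => nth j l (fun _ => s)).
    pose proof (@hstar (length l)) as HY. unfold star_n in HY. specialize (HY qs).
    assert (Hq : forall j m, j < length l -> Q (qs j m)).
    { intros j m hj. apply (hl (qs j)). apply nth_In; auto. }
    specialize (HY Hq s).
    assert (Hl : forall j, j < length l -> le s (lim (qs j))).
    { intros j hj. apply (hl (qs j)). apply nth_In; auto. }
    specialize (HY Hl).
    assert (HZ := hint _ _ HY HX).
    destruct (classic (exists m, (exists s0, le s0 s /\ forall j, j < length l -> le s0 (qs j m)) /\ X m))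
      as [[m [[s' [hs' hj]] Xm]] | hno].
    + assert (Hg : forall q, In q l -> forces_in le s' (generic_name q) m).
      { intros q hq. destruct (In_nth l q (fun _ => s) hq) as [j [hjl hjq]].
        intros t ht. exists t; split; [apply hrefl|]. exists (q m); split; [reflexivity|].
        eapply htrans; [exact ht|]. rewrite <- hjq. apply hj; auto. }
      specialize (hf m s' hs' Xm Hg).
      destruct (hf s' (hrefl s')) as [_ [_ [a [[] _]]]].
    + apply hne. eapply hup; [exact HZ|]. intros m Hm. apply hno. exists m; exact Hm.
Qed.

End G.
From mathcomp Require Import classical_sets.

Section Z.
Variables (T : Type) (le : T -> T -> Prop).
Hypothesis hrefl : forall p, le p p.
Hypothesis htrans : forall p q r, le p q -> le q r -> le p r.

Lemma exists_max (G : name T -> T -> Prop) : filt le G -> (forall p, exists rho, G rho p) ->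
 exists U, filt le U /\ (forall s p, G s p -> U s p) /\
   (forall s p, dense_below le p (U s) -> U s p) /\
   (forall s p, dense_below le p (fun r => U s r \/ U (compl_name le s) r)).
Proof.
  intros hG hne.
  pose (P := fun (A : set (name T * T)) => filt le (fun s p => G s p \/ A (s, p))).
  destruct (@Zorn_bigcup (name T * T) P) as [A [PA Amax]].
  { intros F HF Htot. destruct hG as [Gd [Gu [Gi Gp]]].
    split; [|split; [|split]].
    - intros s p r [H|[X FX HX]] hr; [left; eauto|].
      destruct (HF X FX) as [Xd _]. destruct (Xd s p r (or_intror HX) hr) as [H'|H'];
        [left; exact H' | right; exists X; assumption].
    - intros s t p [H|[X FX HX]] hr; [left; eauto|].
      destruct (HF X FX) as [_ [Xu _]]. destruct (Xu s t p (or_intror HX) hr) as [H'|H'];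
        [left; exact H' | right; exists X; assumption].
    - intros a b c p [H|[X FX HX]] [H'|[Y FY HY]] hs.
      + left; eauto.
      + destruct (HF Y FY) as [_ [_ [Yi _]]].
        destruct (Yi a b c p (or_introl H) (or_intror HY) hs) as [K|K];
          [left; exact K | right; exists Y; assumption].
      + destruct (HF X FX) as [_ [_ [Xi _]]].
        destruct (Xi a b c p (or_intror HX) (or_introl H') hs) as [K|K];
          [left; exact K | right; exists X; assumption].
      + destruct (Htot X Y FX FY) as [XY|YX].
        * destruct (HF Y FY) as [_ [_ [Yi _]]].
          destruct (Yi a b c p (or_intror (XY _ HX)) (or_intror HY) hs) as [K|K];
            [left; exact K | right; exists Y; assumption].
        * destruct (HF X FX) as [_ [_ [Xi _]]].
          destruct (Xi a b c p (or_intror HX) (or_intror (YX _ HY)) hs) as [K|K];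
            [left; exact K | right; exists X; assumption].
    - intros p [H|[X FX HX]]; [eapply Gp; eauto|].
      destruct (HF X FX) as [_ [_ [_ Xp]]]. exact (Xp p (or_intror HX)). }
  pose (U := fun s p => G s p \/ A (s, p)).
  assert (hU : filt le U) by exact PA.
  assert (key : forall W, filt le W -> (forall s p, U s p -> W s p) -> forall s p, W s p -> U s p).
  { intros W hW hUW s p Wsp.
    pose (B := fun x : name T * T => W (fst x) (snd x)).
    assert (PB : P B).
    { apply (union_filt hrefl G hW). intros; apply hUW; left; auto. }
    destruct (classic (forall x, B x -> A x)) as [BA|nBA].
    - right. apply (BA (s, p)). exact Wsp.
    - exfalso. apply (Amax B); [|exact PB]. split.
      + intros [x1 x2] Ax. apply hUW. right; exact Ax.
      + exact nBA. }
  assert (hUne : forall p, exists rho, U rho p).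
  { intros p. destruct (hne p) as [rho H]. exists rho; left; exact H. }
  exists U. split; [exact hU|split; [intros; left; auto|split]].
  - intros s p Hd. apply (key (Uc le U)).
    + apply (Uc_filt hrefl htrans hU).
    + intros; apply (U_Uc hrefl); auto.
    + exact Hd.
  - intros s p r0 hr0. apply NNPP; intro Hn.
    assert (hcomp : forall t, le t r0 -> ~ U (compl_name le s) t).
    { intros t ht H. apply Hn. exists t; split; auto. }
    assert (hs : ~ U s r0).
    { intros H. apply Hn. exists r0; split; auto. }
    apply hs. apply (key (Ux le U s r0)).
    + apply (Ux_filt hrefl htrans s r0 hU hcomp).
    + intros; apply (U_Ux hrefl); auto.
    + apply (Ux_sg le hrefl U s r0 hUne).
Qed.
End Z.

Theorem lemma3p27 (T : Type) (le : T -> T -> Prop) (Q : T -> Prop) :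
  is_poset le ->
  (forall (D : (nat -> Prop) -> Prop) (lim : (nat -> T) -> T),
      ultrafilter D -> nonprincipal D ->
      suff_D_lim_linked_by le Q D lim -> D_lim_linked_by le Q D lim) /\
  (suff_uf_lim_linked le Q -> uf_lim_linked le Q).
Proof.
  intros [hrefl [htrans _]].
  assert (P1 : forall (D : (nat -> Prop) -> Prop) (lim : (nat -> T) -> T),
      ultrafilter D -> nonprincipal D ->
      suff_D_lim_linked_by le Q D lim -> D_lim_linked_by le Q D lim).
  { intros D lim hD _ hstar.
    destruct (@exists_max T le hrefl htrans (G0 le Q D lim)) as [U [hU [hGU [hdc hult]]]].
    - apply (G0_filt hrefl htrans hD hstar).
    - intros p. exists (check_name (fun _ => True)). apply (G0_check le Q D lim hrefl). apply (D_true hD).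
    - exists U. destruct hU as [Ud [Uu [Ui Up]]]. split.
      + split; [exact Ud|split; [exact hdc|split; [exact Uu|split; [exact Ui|split; [exact Up|split; [exact hult|]]]]]].
        intros X p HX. apply hGU. apply (G0_check le Q D lim hrefl); auto.
      + intros q hq. apply hGU. apply (G0_gen le Q lim hrefl hD); auto. }
  split; [exact P1|].
  intros H D hD hnp. destruct (H D hD hnp) as [lim hl]. exists lim. apply P1; auto.
Qed.
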